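(* Let $b>0$, $m\ge 0$ with $b^2>4m$, $\alpha>0$, $\lambda\in\mathbb{R}\setminus\{0\}$, $k\in\mathbb{N}_0^n$, and $\mu_k=2|k|+n$. Let $a_0,a_1\in\mathbb{C}$ and let $w(t)$ solve $$w''(t)+bw'(t)+(|\lambda|^\alpha\mu_k^\alpha+m)w(t)=0\ (t>0),\qquad w(0)=a_0,\ w'(0)=a_1.$$ Then, with implicit constants independent of $t,\lambda,k,a_0,a_1$: 1. If $|\lambda|<\frac1{\mu_k}\left[\frac12\left(\frac{b^2}{4}-m\right)\right]^{1/\alpha}$, then $|w(t)|^2\lesssim e^{(-b+\sqrt{b^2-4m-4|\lambda|^\alpha\mu_k^\alpha})t}(|a_0|^2+|a_1|^2)$; and if $|\lambda|>\frac1{\mu_k}\left[\frac12\left(\frac{b^2}{4}-m\right)\right]^{1/\alpha}$, then $|w(t)|^2\lesssim e^{(-b+\sqrt{\frac12(b^2-4m)})t}(|a_0|^2+|a_1|^2)$. 2. If $|\lambda|<\frac1{\mu_k}\left[\frac12\left(\frac{b^2}{4}-m\right)\right]^{1/\alpha}$, then $$|w'(t)|^2\lesssim e^{(-b+\sqrt{b^2-4m-4|\lambda|^\alpha\mu_k^\alpha})t}(|\lambda|^\alpha\mu_k^\alpha+m)^2(|a_0|^2+|a_1|^2)+e^{(-b-\sqrt{b^2-4m-4|\lambda|^\alpha\mu_k^\alpha})t}|a_1|^2;$$ and if $|\lambda|>\frac1{\mu_k}\left[\frac12\left(\frac{b^2}{4}-m\right)\right]^{1/\alpha}$, then $|w'(t)|^2\lesssim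 e^{(-b+\sqrt{\frac12(b^2-4m)})t}\left((|\lambda|^\alpha\mu_k^\alpha+m)|a_0|^2+|a_1|^2\right)$. 3. If $|\lambda|<\frac1{\mu_k}\left[\frac12\left(\frac{b^2}{4}-m\right)\right]^{1/\alpha}$, then $|(|\lambda|\mu_k)^{\alpha/2}w(t)|^2\lesssim e^{(-b+\sqrt{b^2-4m-4|\lambda|^\alpha\mu_k^\alpha})t}(|\lambda|\mu_k)^\alpha(|a_0|^2+|a_1|^2)$; and if $|\lambda|>\frac1{\mu_k}\left[\frac12\left(\frac{b^2}{4}-m\right)\right]^{1/\alpha}$, then $|(|\lambda|\mu_k)^{\alpha/2}w(t)|^2\lesssim e^{(-b+\sqrt{\frac12(b^2-4m)})t}\left(|\lambda|^\alpha\mu_k^\alpha|a_0|^2+|a_1|^2\right)$.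
   Context: In the paper, $w(t)=\widehat{u}(t,\lambda)_{k,\ell}=(\widehat u(t,\lambda)e_k,e_\ell)_{L^2(\mathbb{R}^n)}$ are the Hermite matrix coefficients of the group Fourier transform of a solution of the linear fractional damped wave equation on $\mathbb{H}^n$, with $a_0=\widehat{u}_0(\lambda)_{k,\ell}$, $a_1=\widehat{u}_1(\lambda)_{k,\ell}$; $\mu_k=2|k|+n$ are the eigenvalues of the Hermite operator on $\mathbb{R}^n$. The lemma is a statement about the scalar ODE above. *)

(* Defs.v *)
From Stdlib Require Export Reals List.
From Coquelicot Require Export Coquelicot.
Open Scope R_scope.

(* |k| = k_1 + ... + k_n for a multi-index k in N_0^n, represented as a list of length n *)
Definition mindex_abs (k : list nat) : nat := fold_right Nat.add 0%nat k.

(* mu_k = 2|k| + n : eigenvalue of the Hermite operator on R^n *)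
Definition mu (n : nat) (k : list nat) : R := INR (2 * mindex_abs k + n).

Definition thr (b m alpha muk : R) : R :=
  / muk * Rpower ((1/2) * (b ^ 2 / 4 - m)) (1 / alpha).

Definition solves_ode (b c : R) (a0 a1 : Complex.C) (w dw ddw : R -> Complex.C) : Prop :=
  (forall t, 0 <= t -> is_derive w t (dw t)) /\
  (forall t, 0 < t -> is_derive dw t (ddw t)) /\
  (forall t, 0 < t -> (ddw t + RtoC b * dw t + RtoC c * w t)%C = RtoC 0) /\
  w 0 = a0 /\ dw 0 = a1.

(* Main.v *)
Require Import Defs.
From Stdlib Require Import Reals List Lra Psatz ClassicalEpsilon.
From Coquelicot Require Import Coquelicot.
Open Scope R_scope.

Lemma approach0 (p q : R -> R) :
  (forall t, 0 <= t -> is_derive p t (q t)) ->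
  forall d, 0 < d -> exists x, 0 < x < d /\ Rabs (p x - p 0) < d /\ Rabs (q x - q 0) < d.
Proof.
  intros Hd d Hd0.
  assert (H0 := proj1 (is_derive_Reals p 0 (q 0)) (Hd 0 (Rle_refl 0))).
  destruct (H0 d Hd0) as [d1 Hd1].
  destruct (H0 1 Rlt_0_1) as [d2 Hd2].
  set (h := Rmin (Rmin d1 d2) (d / (1 + Rabs (q 0))) / 2).
  assert (Hq: 0 < 1 + Rabs (q 0)) by (pose proof (Rabs_pos (q 0)); lra).
  assert (Hdq : 0 < d / (1 + Rabs (q 0))) by (apply Rdiv_lt_0_compat; lra).
  assert (Hm1 := Rmin_l (Rmin d1 d2) (d / (1 + Rabs (q 0)))).
  assert (Hm2 := Rmin_r (Rmin d1 d2) (d / (1 + Rabs (q 0)))).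
  assert (Hm3 := Rmin_l d1 d2). assert (Hm4 := Rmin_r d1 d2).
  assert (Hpos : 0 < Rmin (Rmin d1 d2) (d / (1 + Rabs (q 0)))).
  { apply Rmin_pos; [apply Rmin_pos; apply cond_pos|exact Hdq]. }
  assert (Hh : 0 < h) by (unfold h; lra).
  assert (Hhd1 : h < d1) by (unfold h; lra).
  assert (Hhd2 : h < d2) by (unfold h; lra).
  assert (Hhq : h * (1 + Rabs (q 0)) < d).
  { assert (h < d / (1 + Rabs (q 0))) by (unfold h; lra).
    apply (Rmult_lt_compat_r (1 + Rabs (q 0))) in H; [|lra].
    unfold Rdiv in H. rewrite Rmult_assoc, Rinv_l in H; lra. }
  destruct (MVT_cor2 p q 0 h Hh) as [x [Hx1 Hx2]].
  { intros c Hc. apply is_derive_Reals. apply Hd. lra. }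
  exists x. split; [|split].
  - assert (h < d).
    { assert (h <= h * (1 + Rabs (q 0))).
      { pose proof (Rabs_pos (q 0)). nra. }
      lra. }
    lra.
  - assert (Hx0 : x <> 0) by lra.
    assert (Hxa : Rabs x < d2) by (rewrite Rabs_right; lra).
    specialize (Hd2 x Hx0 Hxa).
    rewrite Rplus_0_l in Hd2.
    set (z := (p x - p 0) / x) in Hd2.
    assert (Hz : p x - p 0 = z * x) by (unfold z; field; lra).
    rewrite Hz, Rabs_mult, (Rabs_right x) by lra.
    assert (Rabs z < 1 + Rabs (q 0)).
    { pose proof (Rabs_triang_inv z (q 0)). lra. }
    assert (Rabs z * x < (1 + Rabs (q 0)) * h).
    { pose proof (Rabs_pos z). nra. }
    lra.
  - assert (Hh0 : h <> 0) by lra.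
    assert (Hha : Rabs h < d1) by (rewrite Rabs_right; lra).
    specialize (Hd1 h Hh0 Hha).
    rewrite Rplus_0_l in Hd1.
    replace ((p h - p 0) / h) with (q x) in Hd1 by (rewrite Hx1; field; lra).
    exact Hd1.
Qed.

Lemma seq0 (p q : R -> R) :
  (forall t, 0 <= t -> is_derive p t (q t)) ->
  forall t, 0 < t -> exists xi : nat -> R,
    (forall n, 0 < xi n < t) /\ is_lim_seq xi 0 /\
    is_lim_seq (fun n => p (xi n)) (p 0) /\ is_lim_seq (fun n => q (xi n)) (q 0).
Proof.
  intros Hd t Ht.
  set (d := fun n : nat => / INR (S n)).
  assert (Hdpos : forall n, 0 < d n).
  { intro n. unfold d. apply Rinv_0_lt_compat. apply lt_0_INR. lia. }
  assert (Hdl : is_lim_seq d 0).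
  { unfold d. apply (is_lim_seq_incr_1 (fun n => / INR n) 0).
    replace (Finite 0) with (Rbar_inv p_infty) by reflexivity.
    apply is_lim_seq_inv. apply is_lim_seq_INR. discriminate. }
  assert (Hex : forall n, exists x, 0 < x < Rmin t (d n) /\
     Rabs (p x - p 0) < Rmin t (d n) /\ Rabs (q x - q 0) < Rmin t (d n)).
  { intro n. apply approach0; auto. apply Rmin_pos; auto. }
  exists (fun n => proj1_sig (constructive_indefinite_description _ (Hex n))).
  assert (Hs : forall n, let x := proj1_sig (constructive_indefinite_description _ (Hex n)) in
     0 < x < t /\ x <= d n /\ Rabs (p x - p 0) <= d n /\ Rabs (q x - q 0) <= d n).
  { intro n. simpl. destruct (constructive_indefinite_description _ (Hex n)) as [x Hx]. simpl.
    pose proof (Rmin_l t (d n)). pose proof (Rmin_r t (d n)). lra. }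
  split; [|split; [|split]].
  - intro n. apply (Hs n).
  - apply is_lim_seq_le_le with (fun _ => 0) d.
    + intro n. destruct (Hs n) as [? [? _]]. lra.
    + apply is_lim_seq_const.
    + exact Hdl.
  - apply is_lim_seq_le_le with (fun n => p 0 - d n) (fun n => p 0 + d n).
    + intro n. destruct (Hs n) as [_ [_ [H _]]]. apply Rabs_le_between in H. lra.
    + assert (HH := is_lim_seq_minus' (fun _ => p 0) d (p 0) 0 (is_lim_seq_const _) Hdl). rewrite Rminus_0_r in HH. exact HH.
    + assert (HH := is_lim_seq_plus' (fun _ => p 0) d (p 0) 0 (is_lim_seq_const _) Hdl). rewrite Rplus_0_r in HH. exact HH.
  - apply is_lim_seq_le_le with (fun n => q 0 - d n) (fun n => q 0 + d n).
    + intro n. destruct (Hs n) as [_ [_ [_ H]]]. apply Rabs_le_between in H. lra.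
    + assert (HH := is_lim_seq_minus' (fun _ => q 0) d (q 0) 0 (is_lim_seq_const _) Hdl). rewrite Rminus_0_r in HH. exact HH.
    + assert (HH := is_lim_seq_plus' (fun _ => q 0) d (q 0) 0 (is_lim_seq_const _) Hdl). rewrite Rplus_0_r in HH. exact HH.
Qed.

Lemma drepl (f : R -> R) x d1 d2 : is_derive f x d1 -> d1 = d2 -> is_derive f x d2.
Proof. intros H ->; exact H. Qed.

Lemma dmul (f g : R -> R) x df dg : is_derive f x df -> is_derive g x dg ->
  is_derive (fun s => f s * g s) x (df * g x + f x * dg).
Proof. intros H1 H2. apply (is_derive_mult f g x df dg H1 H2). intros; apply Rmult_comm. Qed.
Lemma dadd (f g : R -> R) x df dg : is_derive f x df -> is_derive g x dg ->
  is_derive (fun s => f s + g s) x (df + dg).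
Proof. intros H1 H2. apply (is_derive_plus f g x df dg H1 H2). Qed.
Lemma dsub (f g : R -> R) x df dg : is_derive f x df -> is_derive g x dg ->
  is_derive (fun s => f s - g s) x (df - dg).
Proof. intros H1 H2. apply (is_derive_minus f g x df dg H1 H2). Qed.
Lemma dconstmul (f : R -> R) k x df : is_derive f x df ->
  is_derive (fun s => k * f s) x (k * df).
Proof. apply is_derive_scal. Qed.
Lemma dexp k x : is_derive (fun s => exp (k * s)) x (k * exp (k * x)).
Proof.
  apply (is_derive_comp exp (fun s => k * s) x (exp (k*x)) k).
  apply is_derive_exp.
  apply (drepl _ x (k * 1) k); [|apply Rmult_1_r]. apply (is_derive_scal (fun s => s)). apply (is_derive_id x).
Qed.

Lemma decr (G dG : R -> R) : (forall t, 0 < t -> is_derive G t (dG t)) ->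
  (forall t, 0 < t -> dG t <= 0) -> forall s t, 0 < s -> s < t -> G t <= G s.
Proof.
  intros HG Hn s t Hs Hst.
  destruct (MVT_cor2 G dG s t Hst) as [c [Hc1 Hc2]].
  { intros c Hc. apply is_derive_Reals. apply HG. lra. }
  assert (dG c <= 0) by (apply Hn; lra). nra.
Qed.

Lemma lim_exp k (xi : nat -> R) : is_lim_seq xi 0 -> is_lim_seq (fun n => exp (k * xi n)) 1.
Proof.
  intro H. rewrite <- exp_0.
  apply (is_lim_seq_continuous exp (fun n => k * xi n) 0).
  apply derivable_continuous, derivable_exp.
  assert (HH := is_lim_seq_mult' (fun _ => k) xi k 0 (is_lim_seq_const _) H).
  rewrite Rmult_0_r in HH. exact HH.
Qed.

Lemma decay (p q G dG : R -> R) (L : R) :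
  (forall t, 0 <= t -> is_derive p t (q t)) ->
  (forall t, 0 < t -> is_derive G t (dG t)) ->
  (forall t, 0 < t -> dG t <= 0) ->
  (forall xi : nat -> R, (forall n, 0 < xi n) -> is_lim_seq xi 0 ->
     is_lim_seq (fun n => p (xi n)) (p 0) -> is_lim_seq (fun n => q (xi n)) (q 0) ->
     is_lim_seq (fun n => G (xi n)) L) ->
  forall t, 0 < t -> G t <= L.
Proof.
  intros Hd HG Hn Hl t Ht.
  destruct (seq0 p q Hd t Ht) as [xi [Hxi [H1 [H2 H3]]]].
  assert (HL := Hl xi (fun n => proj1 (Hxi n)) H1 H2 H3).
  assert (Hle : forall n, G t <= G (xi n)).
  { intro n. apply (decr G dG HG Hn); apply Hxi. }
  assert (HH := is_lim_seq_le (fun _ => G t) (fun n => G (xi n)) (G t) L Hle (is_lim_seq_const _) HL).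
  exact HH.
Qed.

Lemma expo (b c rho sig : R) (p q r : R -> R) :
  (forall t, 0 <= t -> is_derive p t (q t)) ->
  (forall t, 0 < t -> is_derive q t (r t)) ->
  (forall t, 0 < t -> r t + b * q t + c * p t = 0) ->
  rho + sig = - b -> rho * sig = c ->
  forall t, 0 < t -> q t - sig * p t = (q 0 - sig * p 0) * exp (rho * t).
Proof.
  intros Hp Hq Ho Hs Hm t Ht.
  assert (Hder : forall eps : R, forall s, 0 < s ->
    is_derive (fun s => eps * ((q s - sig * p s) * exp ((- rho) * s))) s 0).
  { intros eps s Hs0. eapply drepl.
    - apply dconstmul. apply dmul. apply dsub. apply Hq; lra. apply dconstmul. apply Hp; lra. apply dexp.
    - assert (Hr : r s = - b * q s - c * p s) by (specialize (Ho s Hs0); lra).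
      rewrite Hr. rewrite <- Hm. replace b with (- (rho + sig)) by lra. match goal with |- @eq _ ?a ?b => change (@eq R a b) end. ring. }
  assert (Hlim : forall eps, forall xi : nat -> R, (forall n, 0 < xi n) -> is_lim_seq xi 0 ->
     is_lim_seq (fun n => p (xi n)) (p 0) -> is_lim_seq (fun n => q (xi n)) (q 0) ->
     is_lim_seq (fun n => eps * ((q (xi n) - sig * p (xi n)) * exp ((- rho) * xi n))) (eps * (q 0 - sig * p 0))).
  { intros eps xi _ H0 H1 H2.
    apply is_lim_seq_mult'. apply is_lim_seq_const.
    rewrite <- (Rmult_1_r (q 0 - sig * p 0)).
    apply is_lim_seq_mult'; [|apply lim_exp; exact H0].
    apply is_lim_seq_minus'; auto.
    apply is_lim_seq_mult'; auto. apply is_lim_seq_const. }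
  assert (H1 := decay p q (fun s => 1 * ((q s - sig * p s) * exp ((- rho) * s))) (fun _ => 0) _ Hp
     (Hder 1) (fun _ _ => Rle_refl 0) (Hlim 1) t Ht).
  assert (H2 := decay p q (fun s => (-1) * ((q s - sig * p s) * exp ((- rho) * s))) (fun _ => 0) _ Hp
     (Hder (-1)) (fun _ _ => Rle_refl 0) (Hlim (-1)) t Ht).
  simpl in H1, H2.
  assert (E : (q t - sig * p t) * exp (- rho * t) = q 0 - sig * p 0) by lra.
  rewrite <- E. rewrite Rmult_assoc, <- exp_plus.
  replace (- rho * t + rho * t) with 0 by ring. rewrite exp_0. ring.
Qed.

Lemma sign_aux (b m A s Q P : R) : 0 < s -> s * s = (b ^ 2 - 4 * m) / 2 -> s * s <= 4 * A ->
  2 * (Q + b / 2 * P) * ((- b * Q - (A + m) * P) + b / 2 * Q) + 2 * A * P * Q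
   + (b - s) * ((Q + b / 2 * P) * (Q + b / 2 * P) + A * (P * P)) <= 0.
Proof.
  intros Hs Hss HA.
  assert (Hm : m = (b ^ 2 - 2 * (s * s)) / 4) by lra.
  subst m.
  assert (HB : 2 * (Q + b / 2 * P) * ((- b * Q - (A + (b ^ 2 - 2 * (s * s)) / 4) * P) + b / 2 * Q) + 2 * A * P * Q
   + (b - s) * ((Q + b / 2 * P) * (Q + b / 2 * P) + A * (P * P)) =
      - s * ((Q + b / 2 * P - s / 2 * P) * (Q + b / 2 * P - s / 2 * P)) - s * (A - s * s / 4) * (P * P)) by field.
  rewrite HB.
  assert (0 <= s * ((Q + b / 2 * P - s / 2 * P) * (Q + b / 2 * P - s / 2 * P))) by (apply Rmult_le_pos; [lra| apply Rle_0_sqr]).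
  assert (0 <= s * (A - s * s / 4) * (P * P)) by (apply Rmult_le_pos; [apply Rmult_le_pos; lra| apply Rle_0_sqr]).
  lra.
Qed.

Lemma lyap (b m A s : R) (p q r : R -> R) :
  (forall t, 0 <= t -> is_derive p t (q t)) ->
  (forall t, 0 < t -> is_derive q t (r t)) ->
  (forall t, 0 < t -> r t + b * q t + (A + m) * p t = 0) ->
  0 < s -> s * s = (b ^ 2 - 4 * m) / 2 -> s * s <= 4 * A ->
  forall t, 0 < t ->
  ((q t + b / 2 * p t) * (q t + b / 2 * p t) + A * (p t * p t)) * exp ((b - s) * t)
  <= (q 0 + b / 2 * p 0) * (q 0 + b / 2 * p 0) + A * (p 0 * p 0).
Proof.
  intros Hp Hq Ho Hs Hss HA.
  set (V := fun x => (q x + b / 2 * p x) * (q x + b / 2 * p x) + A * (p x * p x)).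
  apply (decay p q (fun x => V x * exp ((b - s) * x))
    (fun x => (2 * (q x + b / 2 * p x) * (r x + b / 2 * q x) + 2 * A * p x * q x + (b - s) * V x)
       * exp ((b - s) * x))); auto.
  - intros x Hx. unfold V. eapply drepl.
    + apply dmul. apply dadd. apply dmul; apply dadd; try apply Hq; try lra; apply dconstmul; apply Hp; lra.
      apply dconstmul. apply dmul; apply Hp; lra. apply dexp.
    + match goal with |- @eq _ ?a ?b => change (@eq R a b) end. cbv beta. ring.
  - intros x Hx. assert (He := exp_pos ((b - s) * x)).
    assert (Hr : r x = - b * q x - (A + m) * p x) by (specialize (Ho x Hx); lra).
    rewrite Hr. unfold V.
    apply Rmult_le_0_r; [|lra]. apply sign_aux; auto.
  - intros xi _ H0 H1 H2. unfold V.
    rewrite <- (Rmult_1_r ((q 0 + b / 2 * p 0) * (q 0 + b / 2 * p 0) + A * (p 0 * p 0))).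
    apply is_lim_seq_mult'; [|apply lim_exp; exact H0].
    apply is_lim_seq_plus'. apply is_lim_seq_mult'; apply is_lim_seq_plus'; auto;
      apply is_lim_seq_mult'; auto; apply is_lim_seq_const.
    apply is_lim_seq_mult'. apply is_lim_seq_const. apply is_lim_seq_mult'; auto.
Qed.

Lemma sq2 (x y : R) : (x + y) ^ 2 <= 2 * x ^ 2 + 2 * y ^ 2.
Proof. pose proof (pow2_ge_0 (x - y)). nra. Qed.
Lemma div_le (x M E : R) : 0 < E -> x * E <= M -> x <= M / E.
Proof. intros HE H. apply (Rmult_le_reg_r E); auto. unfold Rdiv. rewrite Rmult_assoc, Rinv_l; lra. Qed.

Lemma div_le' (x M S E : R) : 0 < E -> x * E <= M * S -> x <= M / E * S.
Proof. intros HE H. replace (M / E * S) with ((M * S) / E) by (field; lra). apply div_le; auto. Qed.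

Lemma case1_alg (b c s E p0 q0 pt qt X Y : R) :
  0 < b -> 0 < c -> 0 < E -> E <= s * s -> s * s = b ^ 2 - 4 * c -> 0 < s ->
  0 < Y -> Y <= X ->
  qt - ((- b - s) / 2) * pt = (q0 - ((- b - s) / 2) * p0) * X ->
  qt - ((- b + s) / 2) * pt = (q0 - ((- b + s) / 2) * p0) * Y ->
  pt ^ 2 <= (8 * (1 + b ^ 2) / E) * (X ^ 2 * (p0 ^ 2 + q0 ^ 2)) /\
  qt ^ 2 <= ((20 + 16 / b ^ 2 + 4 * b ^ 2) / E) * (X ^ 2 * c ^ 2 * (p0 ^ 2 + q0 ^ 2) + Y ^ 2 * q0 ^ 2).
Proof.
  intros Hb Hc HE HEs Hs Hs0 HY HYX Hu Hv.
  set (rp := (- b + s) / 2) in *. set (rm := (- b - s) / 2) in *.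
  set (u0 := q0 - rm * p0) in *. set (v0 := q0 - rp * p0) in *.
  assert (Hsb : s <= b) by nra.
  assert (Hrm : rm ^ 2 <= b ^ 2) by (unfold rm; nra).
  assert (Hrp : rp ^ 2 <= b ^ 2) by (unfold rp; nra).
  assert (Hprod : rp * rm = c) by (unfold rp, rm; nra).
  assert (Hrpc : rp ^ 2 * b ^ 2 <= 4 * c ^ 2).
  { assert (H1 : rp * (b + s) = - 2 * c) by (unfold rp; nra).
    assert (H2 : rp ^ 2 * (b + s) ^ 2 = 4 * c ^ 2) by (rewrite <- Rpow_mult_distr, H1; ring).
    assert (b ^ 2 <= (b + s) ^ 2) by nra.
    assert (0 <= rp ^ 2) by nra. nra. }
  assert (Hp : s * pt = u0 * X - v0 * Y) by (unfold u0, v0, rp, rm in *; nra).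
  assert (Hq : s * qt = rp * (u0 * X) - rm * (v0 * Y)) by (unfold u0, v0, rp, rm in *; nra).
  assert (Hu0 : u0 ^ 2 <= 2 * q0 ^ 2 + 2 * b ^ 2 * p0 ^ 2).
  { unfold u0. assert (H := sq2 q0 (- rm * p0)). assert (rm ^ 2 * p0 ^ 2 <= b ^ 2 * p0 ^ 2) by (apply Rmult_le_compat_r; nra). nra. }
  assert (Hv0 : v0 ^ 2 <= 2 * q0 ^ 2 + 2 * b ^ 2 * p0 ^ 2).
  { unfold v0. assert (H := sq2 q0 (- rp * p0)). assert (rp ^ 2 * p0 ^ 2 <= b ^ 2 * p0 ^ 2) by (apply Rmult_le_compat_r; nra). nra. }
  assert (HX2 : Y ^ 2 <= X ^ 2) by nra.
  split.
  - apply div_le'; auto.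
    assert (H1 : (s * pt) ^ 2 <= 2 * (u0 ^ 2 * X ^ 2) + 2 * (v0 ^ 2 * Y ^ 2)).
    { rewrite Hp. assert (H := sq2 (u0 * X) (- (v0 * Y))). nra. }
    assert (H2 : v0 ^ 2 * Y ^ 2 <= v0 ^ 2 * X ^ 2) by (apply Rmult_le_compat_l; nra).
    assert (H3 : pt ^ 2 * E <= (s * pt) ^ 2) by (rewrite Rpow_mult_distr; nra).
    assert (H4 : (u0 ^ 2 + v0 ^ 2) * X ^ 2 <= (4 * q0 ^ 2 + 4 * b ^ 2 * p0 ^ 2) * X ^ 2) by (apply Rmult_le_compat_r; nra).
    assert (0 <= b ^ 2 * q0 ^ 2 * X ^ 2) by (apply Rmult_le_pos; [|nra]; nra).
    assert (0 <= p0 ^ 2 * X ^ 2) by nra.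
    nra.
  - apply div_le'; auto.
    assert (H1 : (s * qt) ^ 2 <= 2 * (rp ^ 2 * u0 ^ 2 * X ^ 2) + 2 * ((rm * v0) ^ 2 * Y ^ 2)).
    { rewrite Hq. assert (H := sq2 (rp * (u0 * X)) (- (rm * (v0 * Y)))). nra. }
    assert (Hrv : rm * v0 = rm * q0 - c * p0) by (unfold v0; rewrite <- Hprod; ring).
    assert (H2 : (rm * v0) ^ 2 <= 2 * b ^ 2 * q0 ^ 2 + 2 * c ^ 2 * p0 ^ 2).
    { rewrite Hrv. assert (H := sq2 (rm * q0) (- (c * p0))). assert (rm ^ 2 * q0 ^ 2 <= b ^ 2 * q0 ^ 2) by (apply Rmult_le_compat_r; nra). nra. }
    assert (H3 : rp ^ 2 * u0 ^ 2 <= 8 * c ^ 2 / b ^ 2 * q0 ^ 2 + 8 * c ^ 2 * p0 ^ 2).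
    { assert (rp ^ 2 * u0 ^ 2 <= rp ^ 2 * (2 * q0 ^ 2 + 2 * b ^ 2 * p0 ^ 2)) by (apply Rmult_le_compat_l; nra).
      assert (Hb2 : 0 < b ^ 2) by nra.
      assert (rp ^ 2 <= 4 * c ^ 2 / b ^ 2) by (apply div_le; auto; lra).
      assert (rp ^ 2 * q0 ^ 2 <= 4 * c ^ 2 / b ^ 2 * q0 ^ 2) by (apply Rmult_le_compat_r; nra).
      assert (rp ^ 2 * b ^ 2 * p0 ^ 2 <= 4 * c ^ 2 * p0 ^ 2) by (apply Rmult_le_compat_r; nra).
      nra. }
    assert (H4 : pt ^ 2 * E <= (s * pt) ^ 2) by (rewrite Rpow_mult_distr; nra).
    assert (H5 : qt ^ 2 * E <= (s * qt) ^ 2) by (rewrite Rpow_mult_distr; nra).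
    assert (Hb2 : 0 < b ^ 2) by nra.
    set (N0 := p0 ^ 2 + q0 ^ 2).
    assert (HA : rp ^ 2 * u0 ^ 2 * X ^ 2 <= (8 * c ^ 2 / b ^ 2 * q0 ^ 2 + 8 * c ^ 2 * p0 ^ 2) * X ^ 2) by (apply Rmult_le_compat_r; nra).
    assert (HBB : (rm * v0) ^ 2 * Y ^ 2 <= (2 * b ^ 2 * q0 ^ 2 + 2 * c ^ 2 * p0 ^ 2) * Y ^ 2) by (apply Rmult_le_compat_r; nra).
    assert (HC : 2 * c ^ 2 * p0 ^ 2 * Y ^ 2 <= 2 * c ^ 2 * p0 ^ 2 * X ^ 2) by (apply Rmult_le_compat_l; nra).
    assert (HD : 8 * c ^ 2 / b ^ 2 * q0 ^ 2 <= 8 / b ^ 2 * (c ^ 2 * N0)).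
    { unfold N0. unfold Rdiv. assert (0 < / b ^ 2) by (apply Rinv_0_lt_compat; auto). nra. }
    assert (HE2 : 8 * c ^ 2 * p0 ^ 2 <= 8 * (c ^ 2 * N0)) by (unfold N0; nra).
    assert (HF : 2 * c ^ 2 * p0 ^ 2 <= 2 * (c ^ 2 * N0)) by (unfold N0; nra).
    assert (0 <= c ^ 2 * N0) by (unfold N0; nra).
    assert (0 <= X ^ 2) by nra.
    assert (0 < / b ^ 2) by (apply Rinv_0_lt_compat; auto).
    assert (HG : (8 * c ^ 2 / b ^ 2 * q0 ^ 2 + 8 * c ^ 2 * p0 ^ 2) * X ^ 2 <= (8 / b ^ 2 + 8) * (X ^ 2 * c ^ 2 * N0)).
    { assert (H9 := Rmult_le_compat_r (X ^ 2) _ _ ltac:(auto) (Rplus_le_compat _ _ _ _ HD HE2)). unfold Rdiv in *. nra. }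
    assert (HH : 2 * c ^ 2 * p0 ^ 2 * X ^ 2 <= 2 * (X ^ 2 * c ^ 2 * N0)).
    { assert (H9 := Rmult_le_compat_r (X ^ 2) _ _ ltac:(auto) HF). nra. }
    assert (0 <= X ^ 2 * c ^ 2 * N0) by nra.
    assert (0 <= Y ^ 2 * q0 ^ 2) by nra.
    assert (0 <= b ^ 2 * (Y ^ 2 * q0 ^ 2)) by nra.
    unfold Rdiv in *.
    assert (0 <= / b ^ 2 * (X ^ 2 * c ^ 2 * N0)) by nra.
    nra.
Qed.

Lemma case2_alg (b m A s p0 q0 pt qt Z : R) :
  0 < b -> 0 <= m -> 0 < s -> s * s = (b ^ 2 - 4 * m) / 2 -> s * s <= 4 * A -> 0 < Z ->
  (qt + b / 2 * pt) * (qt + b / 2 * pt) + A * (pt * pt) <=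
    ((q0 + b / 2 * p0) * (q0 + b / 2 * p0) + A * (p0 * p0)) * Z ->
  pt ^ 2 <= ((8 + 2 * b ^ 2) / (s * s) + 1) * (Z * (p0 ^ 2 + q0 ^ 2)) /\
  qt ^ 2 <= (2 + 2 * b ^ 2 / (s * s)) ^ 2 * (Z * ((A + m) * p0 ^ 2 + q0 ^ 2)) /\
  A * pt ^ 2 <= (2 + 2 * b ^ 2 / (s * s)) * (Z * (A * p0 ^ 2 + q0 ^ 2)).
Proof.
  intros Hb Hm Hs Hss HA HZ HV.
  set (E := s * s) in *.
  assert (HE : 0 < E) by (unfold E; nra).
  assert (HA0 : 0 < A) by lra.
  set (K5 := 2 + 2 * b ^ 2 / E).
  assert (Hb2E : b ^ 2 / 2 <= 2 * b ^ 2 / E * A).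
  { unfold Rdiv. assert (0 < / E) by (apply Rinv_0_lt_compat; auto).
    assert (E * / E = 1) by (field; lra).
    assert (0 <= (4 * A - E) * / E) by (apply Rmult_le_pos; lra).
    assert (HAE : 1 / 4 <= A * / E) by nra.
    assert (0 <= b ^ 2) by nra.
    assert (b ^ 2 * (1/4) <= b ^ 2 * (A * / E)) by (apply Rmult_le_compat_l; lra). nra. }
  assert (H2bE : 0 <= 2 * b ^ 2 / E).
  { unfold Rdiv. assert (0 < / E) by (apply Rinv_0_lt_compat; auto). nra. }
  set (V0 := (q0 + b / 2 * p0) * (q0 + b / 2 * p0) + A * (p0 * p0)) in *.
  set (Vt := (qt + b / 2 * pt) * (qt + b / 2 * pt) + A * (pt * pt)) in *.
  assert (HV0 : V0 <= 2 * q0 ^ 2 + b ^ 2 / 2 * p0 ^ 2 + A * p0 ^ 2).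
  { unfold V0. pose proof (sq2 q0 (b / 2 * p0)). nra. }
  assert (HV0' : V0 <= K5 * (A * p0 ^ 2 + q0 ^ 2)).
  { unfold K5. assert (b ^ 2 / 2 * p0 ^ 2 <= 2 * b ^ 2 / E * A * p0 ^ 2) by (apply Rmult_le_compat_r; nra).
    assert (0 <= 2 * b ^ 2 / E * q0 ^ 2) by nra. nra. }
  assert (HVt1 : A * pt ^ 2 <= Vt).
  { unfold Vt. pose proof (Rle_0_sqr (qt + b / 2 * pt)). unfold Rsqr in *. simpl. lra. }
  assert (HVt2 : qt ^ 2 <= K5 * Vt).
  { unfold K5, Vt. pose proof (sq2 (qt + b / 2 * pt) (- (b / 2 * pt))).
    assert (b ^ 2 / 2 * pt ^ 2 <= 2 * b ^ 2 / E * A * pt ^ 2) by (apply Rmult_le_compat_r; nra).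
    assert (0 <= 2 * b ^ 2 / E * ((qt + b / 2 * pt) * (qt + b / 2 * pt))).
    { apply Rmult_le_pos; auto. apply Rle_0_sqr. }
    replace (qt + b / 2 * pt + - (b / 2 * pt)) with qt in H by ring.
    assert (Hsq : (- (b / 2 * pt)) ^ 2 = b ^ 2 / 2 * pt ^ 2 / 2) by (field).
    rewrite Hsq in H.
    set (cc := 2 * b ^ 2 / E) in *. set (y := qt + b / 2 * pt) in *.
    assert (0 <= A * (pt * pt)) by (apply Rmult_le_pos; [lra| apply Rle_0_sqr]).
    assert (0 <= A * pt ^ 2) by nra.
    nra. }
  assert (HK5 : 0 < K5) by (unfold K5; lra).
  split; [|split].
  - assert (HV0A : V0 <= A * (((8 + 2 * b ^ 2) / E + 1) * (p0 ^ 2 + q0 ^ 2))).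
    { assert (HAE : 1 / 4 <= A / E).
      { unfold Rdiv. assert (0 < / E) by (apply Rinv_0_lt_compat; auto).
        assert (E * / E = 1) by (field; lra).
        assert (0 <= (4 * A - E) * / E) by (apply Rmult_le_pos; lra). nra. }
      assert (Hx : A * ((8 + 2 * b ^ 2) / E) = (A / E) * 8 + (A / E) * (2 * b ^ 2)) by (field; lra).
      assert (0 <= b ^ 2) by nra.
      assert ((A / E) * 8 >= 2) by lra.
      assert ((A / E) * (2 * b ^ 2) >= b ^ 2 / 2) by nra.
      assert (Hy : A * (((8 + 2 * b ^ 2) / E + 1) * (p0 ^ 2 + q0 ^ 2)) =
        (A * ((8 + 2 * b ^ 2) / E)) * (p0 ^ 2 + q0 ^ 2) + A * (p0 ^ 2 + q0 ^ 2)) by ring.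
      rewrite Hx in Hy. rewrite Hy.
      set (t1 := A / E * 8) in *. set (t2 := A / E * (2 * b ^ 2)) in *.
      assert (0 <= p0 ^ 2) by nra. assert (0 <= q0 ^ 2) by nra.
      nra. }
    apply (Rmult_le_reg_l A); auto.
    assert (A * pt ^ 2 <= V0 * Z) by lra.
    assert (V0 * Z <= A * (((8 + 2 * b ^ 2) / E + 1) * (p0 ^ 2 + q0 ^ 2)) * Z) by (apply Rmult_le_compat_r; lra).
    nra.
  - assert (qt ^ 2 <= K5 * (V0 * Z)) by (apply (Rle_trans _ _ _ HVt2); apply Rmult_le_compat_l; lra).
    assert (V0 * Z <= K5 * (A * p0 ^ 2 + q0 ^ 2) * Z) by (apply Rmult_le_compat_r; lra).
    assert (0 <= m * p0 ^ 2) by nra.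
    assert (K5 * (A * p0 ^ 2 + q0 ^ 2) * Z <= K5 * ((A + m) * p0 ^ 2 + q0 ^ 2) * Z).
    { apply Rmult_le_compat_r; [lra|]. apply Rmult_le_compat_l; nra. }
    assert (K5 * (V0 * Z) <= K5 * (K5 * ((A + m) * p0 ^ 2 + q0 ^ 2) * Z)) by (apply Rmult_le_compat_l; lra).
    nra.
  - assert (V0 * Z <= K5 * (A * p0 ^ 2 + q0 ^ 2) * Z) by (apply Rmult_le_compat_r; lra).
    nra.
Qed.

Lemma derive_fst (w : R -> C) t (l : C) : is_derive w t l -> is_derive (fun s => fst (w s)) t (fst l).
Proof.
  intro H. unfold is_derive in *.
  apply filterdiff_ext_lin with (fun y : R => fst (@scal R_Ring C_R_ModuleSpace y l)).
  apply (filterdiff_comp' w (fun z : C_R_NormedModule => fst z) t _ _ H).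
  apply (filterdiff_linear (U := C_R_NormedModule) (V := R_NormedModule) (fun z : C  => fst z)).
  apply (is_linear_fst (U := R_NormedModule) (V := R_NormedModule)).
  intros y; reflexivity.
Qed.
Lemma derive_snd (w : R -> C) t (l : C) : is_derive w t l -> is_derive (fun s => snd (w s)) t (snd l).
Proof.
  intro H. unfold is_derive in *.
  apply filterdiff_ext_lin with (fun y : R => snd (@scal R_Ring C_R_ModuleSpace y l)).
  apply (filterdiff_comp' w (fun z : C_R_NormedModule => snd z) t _ _ H).
  apply (filterdiff_linear (U := C_R_NormedModule) (V := R_NormedModule) (fun z : C  => snd z)).
  apply (is_linear_snd (U := R_NormedModule) (V := R_NormedModule)).
  intros y; reflexivity.
Qed.

Lemma Cmod2 (z : C) : Cmod z ^ 2 = fst z ^ 2 + snd z ^ 2.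
Proof. unfold Cmod. rewrite pow2_sqrt; [ring|]. nra. Qed.

Lemma comp_fst b c a0 a1 w dw ddw : solves_ode b c a0 a1 w dw ddw ->
  (forall t, 0 <= t -> is_derive (fun s => fst (w s)) t (fst (dw t))) /\
  (forall t, 0 < t -> is_derive (fun s => fst (dw s)) t (fst (ddw t))) /\
  (forall t, 0 < t -> fst (ddw t) + b * fst (dw t) + c * fst (w t) = 0) /\
  fst (w 0) = fst a0 /\ fst (dw 0) = fst a1.
Proof.
  intros [H1 [H2 [H3 [H4 H5]]]]. split; [|split; [|split]].
  - intros t Ht. apply derive_fst. auto.
  - intros t Ht. apply derive_fst. auto.
  - intros t Ht. specialize (H3 t Ht). apply (f_equal fst) in H3.
    destruct (ddw t), (dw t), (w t). unfold Cplus, Cmult, RtoC in H3. simpl in H3. simpl. lra.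
  - rewrite H4, H5; auto.
Qed.
Lemma comp_snd b c a0 a1 w dw ddw : solves_ode b c a0 a1 w dw ddw ->
  (forall t, 0 <= t -> is_derive (fun s => snd (w s)) t (snd (dw t))) /\
  (forall t, 0 < t -> is_derive (fun s => snd (dw s)) t (snd (ddw t))) /\
  (forall t, 0 < t -> snd (ddw t) + b * snd (dw t) + c * snd (w t) = 0) /\
  snd (w 0) = snd a0 /\ snd (dw 0) = snd a1.
Proof.
  intros [H1 [H2 [H3 [H4 H5]]]]. split; [|split; [|split]].
  - intros t Ht. apply derive_snd. auto.
  - intros t Ht. apply derive_snd. auto.
  - intros t Ht. specialize (H3 t Ht). apply (f_equal snd) in H3.
    destruct (ddw t), (dw t), (w t). unfold Cplus, Cmult, RtoC in H3. simpl in H3. simpl. lra.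
  - rewrite H4, H5; auto.
Qed.

Lemma Rpower_lt_base x y a : 0 < x -> x < y -> 0 < a -> Rpower x a < Rpower y a.
Proof.
  intros Hx Hxy Ha. unfold Rpower. apply exp_increasing.
  apply Rmult_lt_compat_l; auto. apply ln_increasing; auto.
Qed.

Lemma exp_sq x : exp x ^ 2 = exp (2 * x).
Proof. simpl. rewrite Rmult_1_r, <- exp_plus. f_equal; ring. Qed.

Lemma le_K (x Ki K Y : R) : x <= Ki * Y -> 0 <= Y -> Ki <= K -> x <= K * Y.
Proof. intros H1 H2 H3. apply (Rle_trans _ _ _ H1). apply Rmult_le_compat_r; auto. Qed.
Theorem lemma3p1 :
  forall (n : nat), (1 <= n)%nat ->
  forall (b m alpha : R), 0 < b -> 0 <= m -> b ^ 2 > 4 * m -> 0 < alpha ->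
  exists K : R, 0 < K /\
  forall (lambda : R) (k : list nat) (a0 a1 : Complex.C) (w dw ddw : R -> Complex.C),
    lambda <> 0 -> length k = n ->
    let muk := mu n k in
    let A := Rpower (Rabs lambda) alpha * Rpower muk alpha in
    solves_ode b (A + m) a0 a1 w dw ddw ->
    let N := Cmod a0 ^ 2 + Cmod a1 ^ 2 in
    forall t : R, 0 < t ->
    (Rabs lambda < thr b m alpha muk ->
       Cmod (w t) ^ 2 <= K * (exp ((- b + sqrt (b ^ 2 - 4 * m - 4 * A)) * t) * N)
       /\ Cmod (dw t) ^ 2 <=
            K * (exp ((- b + sqrt (b ^ 2 - 4 * m - 4 * A)) * t) * (A + m) ^ 2 * N
                 + exp ((- b - sqrt (b ^ 2 - 4 * m - 4 * A)) * t) * Cmod a1 ^ 2)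
       /\ (Rpower (Rabs lambda * muk) (alpha / 2) * Cmod (w t)) ^ 2 <=
            K * (exp ((- b + sqrt (b ^ 2 - 4 * m - 4 * A)) * t)
                 * Rpower (Rabs lambda * muk) alpha * N)) /\
    (Rabs lambda > thr b m alpha muk ->
       Cmod (w t) ^ 2 <= K * (exp ((- b + sqrt ((1/2) * (b ^ 2 - 4 * m))) * t) * N)
       /\ Cmod (dw t) ^ 2 <=
            K * (exp ((- b + sqrt ((1/2) * (b ^ 2 - 4 * m))) * t)
                 * ((A + m) * Cmod a0 ^ 2 + Cmod a1 ^ 2))
       /\ (Rpower (Rabs lambda * muk) (alpha / 2) * Cmod (w t)) ^ 2 <=
            K * (exp ((- b + sqrt ((1/2) * (b ^ 2 - 4 * m))) * t)
                 * (A * Cmod a0 ^ 2 + Cmod a1 ^ 2))).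
Proof.
  intros n Hn b m alpha Hb Hm Hbm Ha.
  set (E := (b ^ 2 - 4 * m) / 2).
  assert (HE : 0 < E) by (unfold E; lra).
  assert (Hinv : 0 < / E) by (apply Rinv_0_lt_compat; auto).
  assert (Hb2 : 0 < b ^ 2) by nra.
  assert (Hinvb : 0 < / b ^ 2) by (apply Rinv_0_lt_compat; auto).
  set (K1 := 8 * (1 + b ^ 2) / E).
  set (K2 := (20 + 16 / b ^ 2 + 4 * b ^ 2) / E).
  set (K3 := (8 + 2 * b ^ 2) / E + 1).
  set (K4 := (2 + 2 * b ^ 2 / E) ^ 2).
  set (K5 := 2 + 2 * b ^ 2 / E).
  assert (HK1 : 0 < K1) by (unfold K1, Rdiv; apply Rmult_lt_0_compat; nra).
  assert (HK2 : 0 < K2) by (unfold K2, Rdiv; apply Rmult_lt_0_compat; nra).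
  assert (HK5 : 0 < K5) by (unfold K5, Rdiv; nra).
  assert (HK3 : 0 < K3) by (unfold K3, Rdiv; nra).
  assert (HK4 : 0 < K4) by (unfold K4; nra).
  exists (K1 + K2 + K3 + K4 + K5). split; [lra|].
  intros lambda k a0 a1 w dw ddw Hl Hk muk A Hsol N t Ht.
  assert (Hmu : 0 < muk) by (unfold muk, mu; apply lt_0_INR; lia).
  assert (Hla : 0 < Rabs lambda) by (apply Rabs_pos_lt; auto).
  assert (Hlm0 : 0 < Rabs lambda * muk) by nra.
  assert (HAe : A = Rpower (Rabs lambda * muk) alpha) by (unfold A; apply Rpower_mult_distr; auto).
  assert (HApos : 0 < A) by (rewrite HAe; apply exp_pos).
  assert (Hpow2 : forall X, (Rpower (Rabs lambda * muk) (alpha / 2) * X) ^ 2 = A * X ^ 2).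
  { intro X. rewrite Rpow_mult_distr. f_equal. rewrite HAe. simpl. rewrite Rmult_1_r, <- Rpower_plus. f_equal. field. }
  rewrite <- HAe.
  destruct (comp_fst _ _ _ _ _ _ _ Hsol) as [Hp1 [Hq1 [Ho1 [H01 H11]]]].
  destruct (comp_snd _ _ _ _ _ _ _ Hsol) as [Hp2 [Hq2 [Ho2 [H02 H12]]]].
  assert (HN : N = (fst (w 0) ^ 2 + fst (dw 0) ^ 2) + (snd (w 0) ^ 2 + snd (dw 0) ^ 2)).
  { unfold N. rewrite !Cmod2, H01, H11, H02, H12. ring. }
  assert (Ha0 : Cmod a0 ^ 2 = fst (w 0) ^ 2 + snd (w 0) ^ 2) by (rewrite Cmod2, H01, H02; ring).
  assert (Ha1 : Cmod a1 ^ 2 = fst (dw 0) ^ 2 + snd (dw 0) ^ 2) by (rewrite Cmod2, H11, H12; ring).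
  rewrite Hpow2, (Cmod2 (w t)), (Cmod2 (dw t)).
  set (A0 := (1 / 2) * (b ^ 2 / 4 - m)).
  assert (HA0E : A0 = E / 4) by (unfold A0, E; field).
  assert (HA0 : 0 < A0) by lra.
  assert (HA0r : A0 = Rpower (Rpower A0 (1 / alpha)) alpha).
  { rewrite Rpower_mult. replace (1 / alpha * alpha) with 1 by (field; lra). rewrite Rpower_1; auto. }
  assert (HR0 : 0 < Rpower A0 (1 / alpha)) by apply exp_pos.
  unfold thr. fold A0.
  assert (HN0 : 0 <= N) by (unfold N; pose proof (pow2_ge_0 (Cmod a0)); pose proof (pow2_ge_0 (Cmod a1)); lra).
  split; intro Hth.
  -
    assert (Hlm : Rabs lambda * muk < Rpower A0 (1 / alpha)).
    { apply (Rmult_lt_compat_r muk) in Hth; auto.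
      replace (/ muk * Rpower A0 (1 / alpha) * muk) with (Rpower A0 (1 / alpha)) in Hth by (field; lra). exact Hth. }
    assert (HAlt : A < A0).
    { rewrite HAe, HA0r. apply Rpower_lt_base; auto. }
    set (D := b ^ 2 - 4 * m - 4 * A).
    assert (HD : E < D) by (unfold D, E in *; lra).
    set (s := sqrt D).
    assert (Hss : s * s = D) by (apply sqrt_sqrt; lra).
    assert (Hs : 0 < s) by (apply sqrt_lt_R0; lra).
    set (rp := (- b + s) / 2). set (rm := (- b - s) / 2).
    assert (Hsum1 : rp + rm = - b) by (unfold rp, rm; field).
    assert (Hsum2 : rm + rp = - b) by (unfold rp, rm; field).
    assert (Hpr1 : rp * rm = A + m) by (unfold rp, rm; unfold D in Hss; nra).
    assert (Hpr2 : rm * rp = A + m) by lra.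
    set (X := exp (rp * t)). set (Y := exp (rm * t)).
    assert (HY : 0 < Y) by apply exp_pos.
    assert (HYX : Y <= X) by (unfold X, Y; apply Rlt_le, exp_increasing; unfold rp, rm; nra).
    assert (HX2 : X ^ 2 = exp ((- b + s) * t)) by (unfold X; rewrite exp_sq; f_equal; unfold rp; field).
    assert (HY2 : Y ^ 2 = exp ((- b - s) * t)) by (unfold Y; rewrite exp_sq; f_equal; unfold rm; field).
    rewrite <- HX2, <- HY2.
    assert (Hm0 : 0 < A + m) by lra.
    assert (HEs : E <= s * s) by lra.
    assert (Hsc : s * s = b ^ 2 - 4 * (A + m)) by (rewrite Hss; unfold D; ring).
    assert (Hu1 := expo b (A + m) rp rm _ _ _ Hp1 Hq1 Ho1 Hsum1 Hpr1 t Ht).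
    assert (Hv1 := expo b (A + m) rm rp _ _ _ Hp1 Hq1 Ho1 Hsum2 Hpr2 t Ht).
    assert (Hu2 := expo b (A + m) rp rm _ _ _ Hp2 Hq2 Ho2 Hsum1 Hpr1 t Ht).
    assert (Hv2 := expo b (A + m) rm rp _ _ _ Hp2 Hq2 Ho2 Hsum2 Hpr2 t Ht).
    simpl in Hu1, Hv1, Hu2, Hv2.
    destruct (case1_alg b (A + m) s E _ _ _ _ X Y Hb Hm0 HE HEs Hsc Hs HY HYX Hu1 Hv1) as [C1 D1].
    destruct (case1_alg b (A + m) s E _ _ _ _ X Y Hb Hm0 HE HEs Hsc Hs HY HYX Hu2 Hv2) as [C2 D2].
    fold K1 in C1, C2. fold K2 in D1, D2.
    assert (HX2N : 0 <= X ^ 2 * N) by (apply Rmult_le_pos; nra).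
    assert (Hw : fst (w t) ^ 2 + snd (w t) ^ 2 <= K1 * (X ^ 2 * N)) by (rewrite HN; nra).
    split; [|split].
    + apply (le_K _ K1); auto. lra.
    + apply (le_K _ K2).
      * rewrite Ha1, HN. nra.
      * assert (0 <= Y ^ 2 * Cmod a1 ^ 2) by (apply Rmult_le_pos; nra).
        assert (0 <= X ^ 2 * (A + m) ^ 2 * N) by (apply Rmult_le_pos; [apply Rmult_le_pos|]; nra). lra.
      * lra.
    + apply (le_K _ K1).
      * assert (H := Rmult_le_compat_l A _ _ (Rlt_le _ _ HApos) Hw). nra.
      * assert (0 <= X ^ 2 * A * N) by (apply Rmult_le_pos; [apply Rmult_le_pos|]; nra). auto.
      * lra.
  -
    assert (Hlm : Rpower A0 (1 / alpha) < Rabs lambda * muk).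
    { apply (Rmult_lt_compat_r muk) in Hth; auto.
      replace (/ muk * Rpower A0 (1 / alpha) * muk) with (Rpower A0 (1 / alpha)) in Hth by (field; lra). exact Hth. }
    assert (HAgt : A0 < A).
    { rewrite HAe, HA0r. apply Rpower_lt_base; auto. }
    set (s := sqrt ((1 / 2) * (b ^ 2 - 4 * m))).
    assert (Hss : s * s = (b ^ 2 - 4 * m) / 2) by (unfold s; rewrite sqrt_sqrt; lra).
    assert (Hs : 0 < s) by (apply sqrt_lt_R0; lra).
    assert (HsE : s * s = E) by (rewrite Hss; reflexivity).
    assert (H4A : s * s <= 4 * A) by lra.
    set (Z := exp ((- b + s) * t)).
    assert (HZ : 0 < Z) by apply exp_pos.
    assert (HZ1 : exp ((b - s) * t) * Z = 1) by (unfold Z; rewrite <- exp_plus; replace ((b - s) * t + (- b + s) * t) with 0 by ring; apply exp_0).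
    assert (Hconv : forall Vt V0, Vt * exp ((b - s) * t) <= V0 -> Vt <= V0 * Z).
    { intros Vt V0 H. replace Vt with (Vt * exp ((b - s) * t) * Z) by (rewrite Rmult_assoc, HZ1; ring).
      apply Rmult_le_compat_r; lra. }
    assert (L1 := Hconv _ _ (lyap b m A s _ _ _ Hp1 Hq1 Ho1 Hs Hss H4A t Ht)).
    assert (L2 := Hconv _ _ (lyap b m A s _ _ _ Hp2 Hq2 Ho2 Hs Hss H4A t Ht)).
    simpl in L1, L2.
    destruct (case2_alg b m A s _ _ _ _ Z Hb Hm Hs Hss H4A HZ L1) as [C1 [D1 F1]].
    destruct (case2_alg b m A s _ _ _ _ Z Hb Hm Hs Hss H4A HZ L2) as [C2 [D2 F2]].
    rewrite HsE in C1, C2, D1, D2, F1, F2. fold K3 in C1, C2. fold K5 in F1, F2. fold K5 in D1, D2. fold K4 in D1, D2.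
    split; [|split].
    + apply (le_K _ K3).
      * rewrite HN. eapply Rle_trans; [apply Rplus_le_compat; [exact C1|exact C2]|]. right. ring.
      * apply Rmult_le_pos; lra.
      * lra.
    + apply (le_K _ K4).
      * rewrite Ha0, Ha1. eapply Rle_trans; [apply Rplus_le_compat; [exact D1|exact D2]|]. right. unfold K4, K5. ring.
      * apply Rmult_le_pos; [lra|]. pose proof (pow2_ge_0 (Cmod a0)); pose proof (pow2_ge_0 (Cmod a1)). nra.
      * lra.
    + apply (le_K _ K5).
      * rewrite Ha0, Ha1. rewrite Rmult_plus_distr_l. eapply Rle_trans; [apply Rplus_le_compat; [exact F1|exact F2]|]. right. ring.
      * apply Rmult_le_pos; [lra|]. pose proof (pow2_ge_0 (Cmod a0)); pose proof (pow2_ge_0 (Cmod a1)). nra.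
      * lra.
Qed.
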